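(* Let $\mathcal{M}$ be an $n$-abelian category, $\mathcal{A}$ an abelian category and $F:\mathcal{M}\to\mathcal{A}$ a covariant additive functor. (i) If $F$ is left $n$-exact and $f:X\to Y$ is a weak kernel of $g:Y\to Z$, then $F(X)\xrightarrow{F(f)}F(Y)\xrightarrow{F(g)}F(Z)$ is exact. (ii) If $F$ is right $n$-exact and $g:Y\to Z$ is a weak cokernel of $f:X\to Y$, then $F(X)\xrightarrow{F(f)}F(Y)\xrightarrow{F(g)}F(Z)$ is exact.
   Context: A weak cokernel of $f:A\to B$ is a morphism $g:B\to C$ such that $\mathcal{M}(C,W)\to\mathcal{M}(B,W)\to\mathcal{M}(A,W)$ is exact for all $W$ (in particular $gf=0$); a weak kernel is defined dually. A complex $X^0\xrightarrow{d^0}\cdots\xrightarrow{d^n}X^{n+1}$ is right $n$-exact if $0\to\mathcal{M}(X^{n+1},W)\to\cdots\to\mathcal{M}(X^0,W)$ is exact for all $W$, left $n$-exact if $0\to\mathcal{M}(W,X^0)\to\cdots\to\mathcal{M}(W,X^{n+1})$ is exact for all $W$. $F$ is left $n$-exact if it sends left $n$-exact sequences to exact sequences $0\to F(X^0)\to\cdots\to F(X^{n+1})$, and right $n$-exact if it sends right $n$-exact sequences to exact sequences $F(X^0)\to\cdots\to F(X^{n+1})\to0$. An $n$-abelian category is an idempotent complete additive category in which every morphism has an $n$-kernel and an $n$-cokernel, and in which every monomorphism (resp. epimorphism) together with any of its $n$-cokernels (resp. $n$-kernels) forms an $n$-exact sequence. *)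

(* Defs.v *)
From HB Require Import structures.
From mathcomp Require Import all_boot all_algebra.
Set Implicit Arguments. Unset Strict Implicit. Unset Printing Implicit Defensive.
Import GRing.Theory.
Local Open Scope ring_scope.

Record preadd := PreAdd {
  Ob :> Type;
  Hom : Ob -> Ob -> zmodType;
  idm : forall a, Hom a a;
  comp : forall a b c, Hom b c -> Hom a b -> Hom a c;
  compA : forall a b c d (f : Hom c d) (g : Hom b c) (h : Hom a b),
      comp f (comp g h) = comp (comp f g) h;
  comp1m : forall a b (f : Hom a b), comp (idm b) f = f;
  compm1 : forall a b (f : Hom a b), comp f (idm a) = f;
  compDl : forall a b c (f f' : Hom b c) (g : Hom a b),
      comp (f + f') g = comp f g + comp f' g;
  compDr : forall a b c (f : Hom b c) (g g' : Hom a b),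
      comp f (g + g') = comp f g + comp f g'
}.
Arguments Hom {C} : rename.
Arguments idm {C} a : rename.
Arguments comp {C a b c} : rename.

Section Cat.
Variable C : preadd.

Definition castHom (a a' b b' : C) (e1 : a = a') (e2 : b = b') (f : Hom a b)
  : Hom a' b' :=
  match e1 in _ = x return Hom x b' with
  | erefl => match e2 in _ = y return Hom a y with erefl => f end
  end.

Definition mono (a b : C) (f : Hom a b) :=
  forall (W : C) (h1 h2 : Hom W a), comp f h1 = comp f h2 -> h1 = h2.
Definition epi (a b : C) (f : Hom a b) :=
  forall (W : C) (h1 h2 : Hom b W), comp h1 f = comp h2 f -> h1 = h2.

Definition is_zero_obj (z : C) :=
  (forall (a : C) (f : Hom z a), f = 0) /\ (forall (a : C) (f : Hom a z), f = 0).

Definition has_biproduct (a b : C) :=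
  exists (p : C) (i1 : Hom a p) (i2 : Hom b p) (p1 : Hom p a) (p2 : Hom p b),
    [/\ comp p1 i1 = idm a, comp p2 i2 = idm b, comp p1 i2 = 0,
        comp p2 i1 = 0 & comp i1 p1 + comp i2 p2 = idm p].

Definition additive_cat :=
  (exists z : C, is_zero_obj z) /\ (forall a b : C, has_biproduct a b).

Definition idempotent_complete :=
  forall (a : C) (e : Hom a a), comp e e = e ->
    exists (b : C) (r : Hom a b) (s : Hom b a), comp r s = idm b /\ comp s r = e.

Definition is_kernel (K a b : C) (g : Hom a b) (k : Hom K a) :=
  comp g k = 0 /\
  forall (W : C) (h : Hom W a), comp g h = 0 -> exists! u : Hom W K, comp k u = h.
Definition is_cokernel (a b Q : C) (f : Hom a b) (q : Hom b Q) :=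
  comp q f = 0 /\
  forall (W : C) (h : Hom b W), comp h f = 0 -> exists! u : Hom Q W, comp u q = h.

Definition abelian_cat :=
  [/\ additive_cat,
      (forall (a b : C) (f : Hom a b), exists (K : C) (k : Hom K a), is_kernel f k),
      (forall (a b : C) (f : Hom a b), exists (Q : C) (q : Hom b Q), is_cokernel f q),
      (forall (a b : C) (f : Hom a b), mono f -> exists (c : C) (g : Hom b c), is_kernel g f)
    & (forall (a b : C) (f : Hom a b), epi f -> exists (c : C) (g : Hom c a), is_cokernel g f)].

(* exactness at y of x --f--> y --g--> z in an abelian category: im f = ker g,
   i.e. g f = 0 and (coker f) o (ker g) = 0 *)
Definition exact_at (x y z : C) (f : Hom x y) (g : Hom y z) :=
  comp g f = 0 /\
  forall (K : C) (k : Hom K y) (Q : C) (q : Hom y Q),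
    is_kernel g k -> is_cokernel f q -> comp q k = 0.

Definition weak_kernel (x y z : C) (f : Hom x y) (g : Hom y z) :=
  forall (W : C) (h : Hom W y), comp g h = 0 <-> exists h' : Hom W x, h = comp f h'.
Definition weak_cokernel (x y z : C) (g : Hom y z) (f : Hom x y) :=
  forall (W : C) (h : Hom y W), comp h f = 0 <-> exists h' : Hom z W, h = comp h' g.

(* A sequence X^0 -> X^1 -> ... -> X^{n+1} is given by X : nat -> C and
   d k : X k -> X (k+1) (only k <= n matters). *)
(* left n-exact: 0 -> M(W,X^0) -> ... -> M(W,X^{n+1}) exact for all W *)
Definition left_nexact (n : nat) (X : nat -> C) (d : forall k, Hom (X k) (X k.+1)) :=
  forall W : C,
    (forall h : Hom W (X 0%N), comp (d 0%N) h = 0 -> h = 0) /\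
    (forall k, (k < n)%N -> forall h : Hom W (X k.+1),
        comp (d k.+1) h = 0 <-> exists h' : Hom W (X k), h = comp (d k) h').
(* right n-exact: 0 -> M(X^{n+1},W) -> ... -> M(X^0,W) exact for all W *)
Definition right_nexact (n : nat) (X : nat -> C) (d : forall k, Hom (X k) (X k.+1)) :=
  forall W : C,
    (forall h : Hom (X n.+1) W, comp h (d n) = 0 -> h = 0) /\
    (forall k, (k < n)%N -> forall h : Hom (X k.+1) W,
        comp h (d k) = 0 <-> exists h' : Hom (X k.+2) W, h = comp h' (d k.+1)).
Arguments left_nexact n X d : clear implicits.
Arguments right_nexact n X d : clear implicits.
Definition nexact n X d := left_nexact n X d /\ right_nexact n X d.
Arguments nexact n X d : clear implicits.

Definition has_nkernel (n : nat) (Y Z : C) (f : Hom Y Z) :=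
  exists (X : nat -> C) (d : forall k, Hom (X k) (X k.+1))
         (eY : X n = Y) (eZ : X n.+1 = Z),
    castHom eY eZ (d n) = f /\ left_nexact n X d.
Definition has_ncokernel (n : nat) (X0 X1 : C) (f : Hom X0 X1) :=
  exists (X : nat -> C) (d : forall k, Hom (X k) (X k.+1))
         (e0 : X 0%N = X0) (e1 : X 1%N = X1),
    castHom e0 e1 (d 0%N) = f /\ right_nexact n X d.

Definition n_abelian (n : nat) :=
  [/\ additive_cat, idempotent_complete,
      (forall (Y Z : C) (f : Hom Y Z), has_nkernel n f),
      (forall (Y Z : C) (f : Hom Y Z), has_ncokernel n f)
    &
      (forall X d, mono (d 0%N) -> right_nexact n X d -> nexact n X d) /\
      (forall X d, epi (d n) -> left_nexact n X d -> nexact n X d)].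

End Cat.
Arguments left_nexact {C} n X d.
Arguments right_nexact {C} n X d.
Arguments nexact {C} n X d.

Record functor (C D : preadd) := Functor {
  Fob :> C -> D;
  Fhom : forall a b : C, Hom a b -> Hom (Fob a) (Fob b);
  Fid : forall a : C, Fhom (idm a) = idm (Fob a);
  Fcomp : forall (a b c : C) (f : Hom b c) (g : Hom a b),
      Fhom (comp f g) = comp (Fhom f) (Fhom g)
}.
Arguments Fhom {C D} F {a b} : rename.

Definition additive_functor (C D : preadd) (F : functor C D) :=
  forall (a b : C) (f g : Hom a b), Fhom F (f + g) = Fhom F f + Fhom F g.

Definition left_nexact_functor (n : nat) (C D : preadd) (F : functor C D) :=
  forall (X : nat -> C) (d : forall k, Hom (X k) (X k.+1)),
    left_nexact n X d ->
    mono (Fhom F (d 0%N)) /\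
    (forall k, (k < n)%N -> exact_at (Fhom F (d k)) (Fhom F (d k.+1))).
Definition right_nexact_functor (n : nat) (C D : preadd) (F : functor C D) :=
  forall (X : nat -> C) (d : forall k, Hom (X k) (X k.+1)),
    right_nexact n X d ->
    epi (Fhom F (d n)) /\
    (forall k, (k < n)%N -> exact_at (Fhom F (d k)) (Fhom F (d k.+1))).

(* Main.v *)
Require Import Defs.
From mathcomp Require Import all_boot ssralg.
Import Defs.
Import GRing.Theory.
Local Open Scope ring_scope.

Lemma comp0m (C : preadd) (a b c : C) (f : Hom a b) : comp (0 : Hom b c) f = 0.
Proof.
apply: (addrI (comp (0 : Hom b c) f)).
by rewrite -compDl !addr0.
Qed.

Lemma compm0 (C : preadd) (a b c : C) (f : Hom b c) : comp f (0 : Hom a b) = 0.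
Proof.
apply: (addrI (comp f (0 : Hom a b))).
by rewrite -compDr !addr0.
Qed.

Lemma F0 (C D : preadd) (F : functor C D) (HF : additive_functor F) (a b : C) :
  Fhom F (0 : Hom a b) = 0.
Proof.
apply: (addrI (Fhom F (0 : Hom a b))).
by rewrite -HF !addr0.
Qed.

Theorem mainTheorem9 (n : nat) (hn : (0 < n)%N) (M A : preadd)
  (HM : n_abelian M n) (HA : abelian_cat A)
  (F : functor M A) (HF : additive_functor F) :
  (left_nexact_functor n F ->
     forall (X Y Z : M) (f : Hom X Y) (g : Hom Y Z),
       weak_kernel f g -> exact_at (Fhom F f) (Fhom F g)) /\
  (right_nexact_functor n F ->
     forall (X Y Z : M) (f : Hom X Y) (g : Hom Y Z),
       weak_cokernel g f -> exact_at (Fhom F f) (Fhom F g)).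
Proof.
destruct HM as [_ _ Hker Hcok _].
destruct HA as [_ HAk HAc _ _].
destruct n as [|m]; first by [].
split.
- move=> HL X Y Z f g Hwk.
  have gf0 : comp g f = 0.
    by apply/(Hwk X f); exists (idm X); rewrite compm1.
  destruct (Hker Y Z g) as [Xs [d [eY [eZ [Hd Hl]]]]].
  subst Y Z. simpl in Hd. subst g.
  have [_ Hex] := HL Xs d Hl.
  have dd0 : comp (d m.+1) (d m) = 0.
    by apply/((Hl (Xs m)).2 m (ltnSn m) (d m)); exists (idm _); rewrite compm1.
  have [u Hu] := (Hwk _ (d m)).1 dd0.
  split; first by rewrite -Fcomp gf0 F0.
  move=> K k Q q Hk Hq.
  have [Q' [q' Hq']] := HAc _ _ (Fhom F (d m)).
  have qk0 := (Hex m (ltnSn m)).2 K k Q' q' Hk Hq'.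
  have qd0 : comp q (Fhom F (d m)) = 0.
    by rewrite Hu Fcomp compA Hq.1 comp0m.
  have [v [Hv _]] := Hq'.2 Q q qd0.
  by rewrite -Hv -compA qk0 compm0.
- move=> HR X Y Z f g Hwc.
  have gf0 : comp g f = 0.
    by apply/(Hwc Z g); exists (idm Z); rewrite comp1m.
  destruct (Hcok X Y f) as [Xs [d [e0 [e1 [Hd Hr]]]]].
  subst X Y. simpl in Hd. subst f.
  have [_ Hex] := HR Xs d Hr.
  have dd0 : comp (d 1%N) (d 0%N) = 0.
    by apply/((Hr (Xs 2%N)).2 0%N (ltn0Sn m) (d 1%N)); exists (idm _); rewrite comp1m.
  have [u Hu] := (Hwc _ (d 1%N)).1 dd0.
  split; first by rewrite -Fcomp gf0 F0.
  move=> K k Q q Hk Hq.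
  have [K' [k' Hk']] := HAk _ _ (Fhom F (d 1%N)).
  have qk0 := (Hex 0%N (ltn0Sn m)).2 K' k' Q q Hk' Hq.
  have dk0 : comp (Fhom F (d 1%N)) k = 0.
    by rewrite Hu Fcomp -compA Hk.1 compm0.
  have [v [Hv _]] := Hk'.2 K k dk0.
  by rewrite -Hv compA qk0 comp0m.
Qed.
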